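(* For the canonical collection $\mathcal{S}$, $$B(\mathcal{S}):=\int_0^\infty\big|\{S\in\mathcal{S}: t\text{ is }S\text{-bad}\}\big|\,dt\ \le\ 2\cdot\mathrm{excess}(\mathrm{OPT}).$$
   Context: Steiner Forest: finite undirected graph $G=(V,E)$ with non-negative edge costs $(c_e)_{e\in E}$ and a set $\mathcal{D}$ of demand pairs $\{a,b\}\subseteq V$ (partners); feasible solutions are $F\subseteq E$ with each demand pair in one connected component of $(V,F)$, of cost $c(F)=\sum_{e\in F}c_e$. $\mathrm{OPT}$ is a fixed optimal solution that is inclusionwise minimal (no cost-$0$ edge can be omitted keeping feasibility). For $U\subseteq V$, $\delta(U)$ is the set of edges with exactly one endpoint in $U$; $U$ separates $S$ if $S\cap U\ne\emptyset$ and $S\setminus U\ne\emptyset$. The $\varepsilon$-extended moat-growing algorithm (fixed $\varepsilon\ge0$): time $t$ increases continuously from $0$ at unit rate; it maintains tight edges $F$ (initially empty), duals $y_S(t)\ge0$ (initially $0$), and budgets of components (initially $0$). $\mathcal{C}^t$ is the family of vertex sets of connected components of $(V,F)$. A component is demand-active if it contains a vertex not connected in $(V,F)$ to some partner; budget-active if not demand-active but with positive budget; active if either; $\mathcal{A}^t$ is the set of active components. Each $y_S$, $S\in\mathcal{A}^t$, grows at unit rate; budgets of demand-active components grow at rate $\varepsilon$ and of budget-active ones decrease at rate $1$; an edge $e$ with $\sum_{S:e\in\delta(S)}y_S(t)=c_e$ becomes tight and is added to $F$; merging components add budgets. $y_S=y_S(\infty)$; $\mathcal{U}_{\mathrm{sep}}$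 is the set of $U\in\mathrm{supp}(y)$ separating some demand pair; $\mathrm{excess}(F)=c(F)-\sum_{U\in\mathcal{U}_{\mathrm{sep}}}y_U$. The deactivation time $\tau_v$ of $v$ is the largest $t$ such that for all $s<t$, $v$ lies in a set of $\mathcal{A}^s$. Vertices $u,v$ are actively connected if for some $t$ they lie in a common set of $\mathcal{C}^t$ and $\tau_u,\tau_v\ge t$ (an equivalence relation). Canonical collection $\mathcal{S}$: start with a family $\mathcal{F}$ in which each tree of $\mathrm{OPT}$ is its own forest; for each $U\in\mathcal{U}_{\mathrm{sep}}$, merge all forests of $\mathcal{F}$ that connect some demand pair separated by $U$ into a single forest. For each $F\in\mathcal{F}$ let $r_F$ be a vertex of $F$ with maximum deactivation time; for each connected component $T$ of $F$, let $S$ be the set of vertices of $T$ actively connected to $r_F$; if $S\ne\emptyset$, add $S$ to $\mathcal{S}$. For $S\in\mathcal{S}$, a time $t\ge0$ is $S$-bad if some set $U\in\mathcal{A}^t$ that separates $S$ also separates some other set $S'\in\mathcal{S}\setminus\{S\}$; otherwise $t$ is $S$-good. *)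

(* Defs.v *)
From HB Require Import structures.
From mathcomp Require Import all_boot all_order all_algebra.
From mathcomp Require Import all_classical all_reals all_analysis.
Set Implicit Arguments. Unset Strict Implicit. Unset Printing Implicit Defensive.
Import Order.TTheory GRing.Theory Num.Theory.
Local Open Scope ring_scope.

(* A finite undirected (multi)graph: vertex type V, edge type E, each edge e
   has the two endpoints [src e] and [tgt e] (orientation irrelevant). *)
Section SteinerForest.
Variables (V E : finType) (src tgt : E -> V).

Definition adj (F : {set E}) : rel V := fun u v =>
  [exists e in F, ((src e == u) && (tgt e == v)) || ((src e == v) && (tgt e == u))].
Definition conn (F : {set E}) (u v : V) : bool := connect (adj F) u v.
Definition comp (F : {set E}) (v : V) : {set V} := [set w | conn F v w].
Definition comps (F : {set E}) : {set {set V}} := [set comp F v | v : V].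
Definition in_delta (U : {set V}) (e : E) : bool := (src e \in U) != (tgt e \in U).
Definition separates (U S : {set V}) : bool := (S :&: U != finset.set0) && (S :\: U != finset.set0).

(* demand pairs {a,b}, given as (a,b) \in D *)
Variable D : {set V * V}.
Definition partners (u w : V) : bool := ((u, w) \in D) || ((w, u) \in D).
Definition feasible (F : {set E}) : bool := [forall p in D, conn F p.1 p.2].
Definition demand_active (F : {set E}) (S : {set V}) : bool :=
  [exists u in S, exists w, partners u w && ~~ conn F u w].

Variables (R : realType) (c : E -> R).
Definition cost (F : {set E}) : R := \sum_(e in F) c e.

(* A run of the eps-extended moat-growing algorithm is described by the tight
   edge set [Fr t] at each time t and the budget [bud t S] of each component
   S of (V, Fr t) at time t; all other quantities are derived below. *)
Variables (eps : R) (Fr : R -> {set E}) (bud : R -> {set V} -> \bar R).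

Definition dact (t : R) (S : {set V}) : bool :=
  (S \in comps (Fr t)) && demand_active (Fr t) S.
Definition bact (t : R) (S : {set V}) : bool :=
  [&& S \in comps (Fr t), ~~ demand_active (Fr t) S & (0 < bud t S)%E].
Definition active (t : R) : {set {set V}} := [set S | dact t S || bact t S].
Definition ydual (t : R) (S : {set V}) : \bar R :=
  lebesgue_measure [set s : R | (0 <= s < t)%R /\ S \in active s]%classic.
Definition load (t : R) (e : E) : \bar R :=
  (\sum_(S : {set V} | in_delta S e) ydual t S)%E.

Definition is_run : Prop :=
  [/\
      forall t, 0 <= t -> forall e, (load t e <= (c e)%:E)%E,
      forall t, 0 <= t -> Fr t = [set e | load t e == (c e)%:E] &
      (* budgets: each former component S' now contained in S contributed
         eps per unit of demand-active time and -1 per unit of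
         budget-active time (budgets add up on merging) *)
      forall t, 0 <= t -> forall S, S \in comps (Fr t) ->
        bud t S = (\sum_(S' : {set V} | S' \subset S)
          (eps%:E * lebesgue_measure [set s : R | (0 <= s < t)%R /\ dact s S']%classic
           - lebesgue_measure [set s : R | (0 <= s < t)%R /\ bact s S']%classic))%E].

Definition yfin (S : {set V}) : \bar R :=
  lebesgue_measure [set s : R | 0 <= s /\ S \in active s]%classic.
Definition sep_demand (U : {set V}) : bool :=
  [exists p in D, separates U [set p.1; p.2]].
Definition Usep : {set {set V}} := [set U | (0 < yfin U)%E && sep_demand U].
Definition excess (F : {set E}) : \bar R :=
  ((cost F)%:E - \sum_(U in Usep) yfin U)%E.

Definition covered (t : R) (v : V) : bool := [exists S in active t, v \in S].
Definition tau (v : V) : \bar R :=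
  ereal_sup [set t%:E | t in [set t : R | 0 <= t /\
                                 forall s, 0 <= s < t -> covered s v]%classic]%classic.
Definition act_conn (u v : V) : Prop :=
  exists t : R, 0 <= t /\ conn (Fr t) u v /\
                (t%:E <= tau u)%E /\ (t%:E <= tau v)%E.

Variable OPT : {set E}.
Definition trees : {set {set V}} := comps OPT.
Definition tree_sep (T U : {set V}) : bool :=
  [exists p in D, [&& p.1 \in T, p.2 \in T & separates U [set p.1; p.2]]].
Definition tree_rel : rel {set V} := fun T1 T2 =>
  [&& T1 \in trees, T2 \in trees &
      [exists U in Usep, tree_sep T1 U && tree_sep T2 U]].
(* result of merging: forests = classes of trees under the closure of tree_rel *)
Definition forest_of (T : {set V}) : {set {set V}} := [set T' | connect tree_rel T T'].
Definition forests : {set {set {set V}}} := [set forest_of T | T in trees].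
Definition fverts (G : {set {set V}}) : {set V} := \bigcup_(T in G) T.
Definition root_ok (r : {set {set V}} -> V) : Prop :=
  forall G, G \in forests -> r G \in fverts G /\
    forall v, v \in fverts G -> (tau v <= tau (r G))%E.
Definition canonical_coll (r : {set {set V}} -> V) : {set {set V}} :=
  (\bigcup_(G in forests)
     [set [set v in T | `[< act_conn v (r G) >]] | T : {set V} in G]) :\ finset.set0.

Definition bad (Sc : {set {set V}}) (t : R) (S : {set V}) : bool :=
  [exists U in active t, separates U S && [exists S' in Sc :\ S, separates U S']].
Definition Bval (Sc : {set {set V}}) : \bar R :=
  (\int[lebesgue_measure]_(t in `[0%R, +oo[%classic)
     (#|[set S in Sc | bad Sc t S]|%:R : R)%:E)%E.

End SteinerForest.

(* Main.v *)
Require Import Defs.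
From HB Require Import structures.
From mathcomp Require Import all_boot all_order all_algebra.
From mathcomp Require Import all_classical all_reals all_analysis.
From mathcomp Require Import zify.
Import Order.TTheory GRing.Theory Num.Theory.
Local Open Scope classical_set_scope.
Local Open Scope ring_scope.

Module Helpers.
Set Implicit Arguments. Unset Strict Implicit.


Section Comb.
Variables (V E : finType) (src tgt : E -> V).

Lemma adj_sym F : symmetric (adj src tgt F).
Proof.
move=> u v; apply/existsP/existsP => -[e He]; exists e;
  by move: He; rewrite orbC.
Qed.

Lemma conn_sym F u v : conn src tgt F u v = conn src tgt F v u.
Proof. exact: (sym_connect_sym (adj_sym F)). Qed.

Lemma conn_trans F u v w : conn src tgt F u v -> conn src tgt F v w -> conn src tgt F u w.
Proof. exact: connect_trans. Qed.

Lemma path_cross F a b (U : {set V}) : conn src tgt F a b -> a \in U -> b \notin U ->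
  exists e, [/\ e \in F, in_delta src tgt U e & conn src tgt F a (src e)].
Proof.
move/connectP => [p Hp ->]; elim: p a Hp => [|y p IH] a /=.
  by move=> _ ->.
move/andP => [Hay Hp] aU bU.
case yU: (y \in U).
  have [e [eF de ce]] := IH y Hp yU bU.
  exists e; split => //; apply: conn_trans ce; rewrite /conn; exact: connect1.
move/existsP: Hay => [e /andP[eF He]]; exists e.
case/orP: He => /andP[/eqP se /eqP te]; split => //.
- by rewrite /in_delta se te aU yU.
- rewrite se /conn. apply: connect0.
- by rewrite /in_delta se te aU yU.
- rewrite se /conn; apply: connect1; apply/existsP; exists e; rewrite eF /=.
  by rewrite se te !eqxx orbT.
Qed.

End Comb.

Section Canon.
Variables (V E : finType) (src tgt : E -> V) (D : {set V * V}) (R : realType)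
  (Fr : R -> {set E}) (bud : R -> {set V} -> \bar R) (OPT : {set E})
  (r : {set {set V}} -> V).

Local Notation Sc := (canonical_coll src tgt D Fr bud OPT r).
Local Notation trel := (tree_rel src tgt D Fr bud OPT).
Local Notation cn := (conn src tgt OPT).

Lemma tree_rel_sym : symmetric trel.
Proof.
move=> T1 T2; rewrite /tree_rel andbA [X in X && _]andbC -andbA; congr (_ && (_ && _)).
by apply/existsP/existsP => -[U /andP[HU /andP[h1 h2]]]; exists U; rewrite HU h1 h2.
Qed.

Lemma trel_trees T0 T : connect trel T0 T -> T0 \in trees src tgt OPT -> T \in trees src tgt OPT.
Proof.
move/connectP => [p Hp ->]; elim: p T0 Hp => [|y p IH] T0 //= /andP[H1 H2] _.
by apply: (IH y H2); case/and3P: H1.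
Qed.

Lemma canon_inv S : S \in Sc -> exists G T v,
  [/\ G \in forests src tgt D Fr bud OPT, T \in G, T = Defs.comp src tgt OPT v &
      S = [set w in T | `[< act_conn src tgt D Fr bud w (r G) >]]].
Proof.
rewrite /canonical_coll in_setD1 => /andP[_ /bigcupP[G HG /imsetP[T HT ->]]].
exists G, T; move: HG => /[dup] HG /imsetP[T0 HT0 HGe].
have : T \in trees src tgt OPT.
  by move: (HT); rewrite HGe inE => /trel_trees H; exact: H HT0.
move=> /imsetP[v _ Tv]; exists v; split => //; by rewrite -Tv.
Qed.

Lemma comp_eq u v : cn u v -> Defs.comp src tgt OPT u = Defs.comp src tgt OPT v.
Proof.
move=> huv; apply/setP => w; rewrite !inE; apply/idP/idP => H.
  by apply: conn_trans H; rewrite conn_sym.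
exact: conn_trans H.
Qed.

Lemma canon_uniq S S' x x' : S \in Sc -> S' \in Sc -> x \in S -> x' \in S' ->
  cn x x' -> S = S'.
Proof.
move=> /canon_inv[G [T [v [HG HT HTv HS]]]] /canon_inv[G' [T' [v' [HG' HT' HTv' HS']]]].
rewrite HS HS' !inE => /andP[xT _] /andP[xT' _] hxx.
have eT : T = T'.
  rewrite HTv HTv'; apply: comp_eq.
  move: xT xT'; rewrite HTv HTv' !inE => h1 h2.
  apply: conn_trans h1 _; apply: conn_trans hxx _; by rewrite conn_sym.
rewrite -eT in HT' HS'.
have eG : G = G'.
  move: HG HG' HT HT' => /imsetP[T0 _ ->] /imsetP[T1 _ ->]; rewrite !inE => h0 h1.
  have sy := sym_connect_sym tree_rel_sym.
  apply/setP => T2; rewrite !inE; apply/idP/idP => h.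
  - apply: (connect_trans h1); apply: (connect_trans _ h); by rewrite sy.
  - apply: (connect_trans h0); apply: (connect_trans _ h); by rewrite sy.
by rewrite eG eT.
Qed.


Lemma canon_conn S x y : S \in Sc -> x \in S -> y \in S -> cn x y.
Proof.
move=> /canon_inv[G [T [v [_ _ -> ->]]]]; rewrite !inE => /andP[hx _] /andP[hy _].
by apply: conn_trans hy; rewrite conn_sym.
Qed.

Definition Bp (U : {set V}) := [set S in Sc | separates U S].
Definition kU (U : {set V}) := #|[set e in OPT | in_delta src tgt U e]|.

Lemma sep_cross S U : S \in Sc -> separates U S ->
  exists e, [/\ e \in OPT, in_delta src tgt U e & [exists x in S, cn x (src e)]].
Proof.
move=> HS /andP[/set0Pn[x] /setIP[xS xU] /set0Pn[y] /setDP[yS yU]].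
have [e [eO de ce]] := path_cross (canon_conn HS xS yS) xU yU.
by exists e; split => //; apply/existsP; exists x; rewrite xS.
Qed.

Lemma card_Bp U : (#|Bp U| <= kU U)%N.
Proof.
have [->|[S0 HS0]] := set_0Vmem (Bp U); first by rewrite cards0.
have [e0 _] : exists e : E, True.
  move: HS0 => /setIdP[H1 H2].
  by have [e _] := sep_cross H1 H2; exists e.
pose P (S : {set V}) (e : E) := [&& e \in OPT, in_delta src tgt U e & [exists x in S, cn x (src e)]].
pose f (S : {set V}) := odflt e0 [pick e | P S e].
have fP S : S \in Bp U -> P S (f S).
  move=> /setIdP[H1 H2]; have [e [h1 h2 h3]] := sep_cross H1 H2.
  rewrite /f; case: pickP => [e' //|/(_ e)]; by rewrite /P h1 h2 h3.
rewrite -(card_in_imset (f := f)); last first.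
  move=> S S' HS HS' efS.
  have /and3P[_ _ /existsP[x /andP[xS cx]]] := fP S HS.
  have /and3P[_ _ /existsP[x' /andP[xS' cx']]] := fP S' HS'.
  move: HS HS' => /setIdP[HS _] /setIdP[HS' _].
  apply: (canon_uniq HS HS' xS xS'); apply: conn_trans cx _.
  by rewrite conn_sym efS.
rewrite /kU; apply: subset_leq_card; apply/fintype.subsetP => _ /imsetP[Z HZ ->].
by have /and3P[h1 h2 _] := fP Z HZ; rewrite inE h1 h2.
Qed.


Definition BU (U : {set V}) := [set S in Sc | separates U S &&
   [exists S' in Sc :\ S, separates U S']].

Lemma sep_le_k U : feasible src tgt D OPT -> sep_demand D U -> (0 < kU U)%N.
Proof.
move=> /forallP Hf /existsP[p /andP[pD /andP[H1 H2]]].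
have cp := implyP (Hf p) pD.
rewrite /kU card_gt0; apply/set0Pn.
case p1U: (p.1 \in U).
  have p2U : p.2 \notin U.
    apply/negP => p2U; move/set0Pn: H2 => [z /setDP[]].
    by rewrite !inE => /orP[]/eqP->; rewrite ?p1U ?p2U.
  have [e [eO de _]] := path_cross cp p1U p2U.
  by exists e; rewrite inE eO de.
have p2U : p.2 \in U.
  move/set0Pn: H1 => [z /setIP[]].
  by rewrite !inE => /orP[]/eqP-> //; rewrite p1U.
have cp' : cn p.2 p.1 by rewrite conn_sym.
have [e [eO de _]] := path_cross cp' p2U (negbT p1U).
by exists e; rewrite inE eO de.
Qed.

Lemma card_BU U : feasible src tgt D OPT ->
  (#|BU U| <= 2 * (kU U - sep_demand D U))%N.
Proof.
move=> Hf.
have [->|[S0 HS0]] := set_0Vmem (BU U); first by rewrite cards0.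
move: (HS0) => /setIdP[S0c /andP[sep0 /existsP[S1 /andP[/setD1P[S10 S1c] sep1]]]].
have sub : BU U \subset Bp U.
  apply/fintype.subsetP => Z /setIdP[Zc /andP[sepZ _]]; rewrite /Bp; exact/setIdP.
have two : (2 <= #|Bp U|)%N.
  have := cards2 S1 S0; rewrite S10 => <-; apply: subset_leq_card.
  apply/fintype.subsetP => Z; rewrite in_set2 => /orP[]/eqP->; rewrite /Bp; exact/setIdP.
have := card_Bp U; have := subset_leq_card sub.
have : (sep_demand D U <= 1)%N by case: sep_demand.
lia.
Qed.

Lemma count_bad (t : R) : (#|[set S in Sc | bad src tgt D Fr bud Sc t S]| <= \sum_(U in active src tgt D Fr bud t) #|BU U|)%N.
Proof.
apply: (@leq_trans #|(\bigcup_(U in active src tgt D Fr bud t) BU U)%SET|).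
  apply: subset_leq_card; apply/fintype.subsetP => Z /setIdP[Zc /existsP[U /andP[UA /andP[h1 h2]]]].
  by apply/bigcupP; exists U => //; apply/setIdP; rewrite h1 h2.
apply: (big_ind2 (fun (A : {set {set V}}) n => #|A| <= n)%N) => //.
- by rewrite cards0.
- move=> A1 n1 A2 n2 h1 h2; apply: leq_trans (leq_card_setU A1 A2) _.
  exact: leq_add.
Qed.

End Canon.



Section Meas.
Variable R : realType.
Local Notation mu := (@lebesgue_measure R).

Lemma mu_mono (A B : set R) : A `<=` B -> (mu A <= mu B)%E.
Proof. exact: (le_mu_ext (wlength idfun)). Qed.

Lemma hull (A : set R) : exists H : set R,
  [/\ measurable H, A `<=` H & mu H = mu A].
Proof.
have [G [oG AG mG]] := outer_measure_Gdelta A.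
exists (\bigcap_i G i); split => //.
by apply: bigcapT_measurable => k; exact: measurable_realfun.open_measurable.
Qed.

Lemma mu_cvg (A : set R) :
  (fun n : nat => mu (A `&` [set s | s < n%:R])) @ \oo --> mu A.
Proof.
set a := fun n : nat => _.
have nd : {homo a : n m / (n <= m)%N >-> (n <= m)%E}.
  move=> n m nm; apply: mu_mono => s [As sn]; split => //.
  by apply: lt_le_trans sn _; rewrite ler_nat.
have ca := ereal_nondecreasing_cvgn nd.
suff <- : ereal_sup (range a) = mu A by [].
apply/eqP; rewrite eq_le; apply/andP; split.
  by apply: ge_ereal_sup => _ [n _ <-]; apply: mu_mono => s [].
have /choice [H HH] : forall n : nat, exists H : set R,
    [/\ measurable H, A `&` [set s | s < n%:R] `<=` H & mu H = a n].
  move=> n; exact: hull.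
pose K (n : nat) := \bigcap_(m in [set m | (n <= m)%N]) H m.
have mK n : measurable (K n).
  apply: bigcap_measurable; first by exists n => /=.
  by move=> k _; case: (HH k).
have ndK : {homo K : n m / (n <= m)%N >-> (n <= m)%O}.
  move=> n m nm; apply/subsetPset => s Ks k /= mk; apply: Ks => /=; exact: leq_trans mk.
have AK : A `<=` \bigcup_n K n.
  move=> s As; exists (Num.bound `|s|) => // k /= hk.
  case: (HH k) => _ sub _; apply: sub; split => //.
  apply: le_lt_trans (ler_norm s) _; apply: lt_le_trans (archi_boundP (normr_ge0 s)) _.
  by rewrite ler_nat.
have cK := nondecreasing_cvg_mu (mu := mu) mK (bigcup_measurable (fun k _ => mK k)) ndK.
apply: le_trans (mu_mono AK) _.
apply: (cvge_le _ cK); apply: nearW => n /=.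
apply: le_trans (ereal_sup_ubound _); last by exists n.
case: (HH n) => mH _ <-; apply: le_measure.
- by rewrite inE; exact: mK.
- by rewrite inE.
- by move=> s Ks; apply: (Ks n) => /=.
Qed.


Lemma le_int_any (D : set R) (f g : R -> \bar R) :
  (forall x, D x -> (0 <= f x)%E) -> (forall x, D x -> (f x <= g x)%E) ->
  (\int[mu]_(x in D) f x <= \int[mu]_(x in D) g x)%E.
Proof.
move=> f0 fg.
have g0 x : D x -> (0 <= g x)%E by move=> Dx; apply: le_trans (f0 x Dx) (fg x Dx).
rewrite !ge0_integralE //; apply: ereal_sup_le => _ [h hf <-]; exists h => //= x.
exact: le_trans (hf x) (lee_restrict fg x).
Qed.

Lemma int_sum_indic (D : set R) (I : finType) (w : I -> R) (H : I -> set R) :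
  measurable D -> (forall i, 0 <= w i) -> (forall i, measurable (H i)) ->
  (\int[mu]_(x in D) (\sum_(i : I) (w i)%:E * (\1_(H i) x)%:E)
   = \sum_(i : I) (w i)%:E * mu (H i `&` D))%E.
Proof.
move=> mD w0 mH.
rewrite ge0_integral_sum //; last first.
- by move=> i x _; rewrite mule_ge0 // lee_fin.
- move=> i; apply/measurable_realfun.measurable_EFinP => /=.
  rewrite (_ : (fun x => _) = (fun x => w i * \1_(H i) x)) //.
  apply: measurable_realfun.measurable_funM.
    exact: measurable_cst.
  exact: (measurable_realfun.measurable_indic (D:=D) (mH i)).
apply: eq_bigr => i _.
rewrite ge0_integralZl_EFin // ?integral_indic //.
all: try exact: mH.
all: try (by move=> x _; rewrite lee_fin).
all: apply/measurable_realfun.measurable_EFinP; exact: (measurable_realfun.measurable_indic (D:=D) (mH i)).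
Qed.


Lemma sume_const (I : finType) (A : {pred I}) (x : \bar R) :
  (\sum_(i in A) x = ((#|A|)%:R)%:E * x)%E.
Proof.
rewrite big_const mule_natl; elim: #|A| => [|n IH]; first by rewrite mule0n.
by rewrite iterS muleS IH.
Qed.

End Meas.

End Helpers.
Import Helpers.
Unset Implicit Arguments. Set Strict Implicit.

Theorem lemma6p8 (R : realType) (V E : finType) (src tgt : E -> V)
  (c : E -> R) (D : {set V * V}) (eps : R) (OPT : {set E})
  (Fr : R -> {set E}) (bud : R -> {set V} -> \bar R)
  (r : {set {set V}} -> V) :
  (forall e, src e != tgt e) ->
  (forall e, 0 <= c e) ->
  0 <= eps ->
  feasible src tgt D OPT ->
  (forall F : {set E}, feasible src tgt D F -> cost c OPT <= cost c F) ->
  (forall e, e \in OPT -> c e = 0 -> ~~ feasible src tgt D (OPT :\ e)) ->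
  is_run src tgt D c eps Fr bud ->
  root_ok src tgt D Fr bud OPT r ->
  (Bval src tgt D Fr bud (canonical_coll src tgt D Fr bud OPT r)
     <= 2%:E * excess src tgt D c Fr bud OPT)%E.
Proof.
move=> _ c0 _ Hfeas _ _ [Hload _ _] _.
pose mu := @lebesgue_measure R.
pose act := active src tgt D Fr bud.
pose AU (U : {set V}) := [set s : R | 0 <= s /\ U \in act s].
pose y U := yfin src tgt D Fr bud U.
have yE U : y U = mu (AU U) by [].
pose k U := kU src tgt OPT U.
pose s U := sep_demand D U.
pose w U := (2 * (k U - s U))%N.
have y0 U : (0 <= y U)%E by rewrite yE; exact: measure_ge0.
have stepE : forall e, (\sum_(U | in_delta src tgt U e) y U <= (c e)%:E)%E.
  move=> e.
  have cv : (fun n : nat => \sum_(U | in_delta src tgt U e) mu (AU U `&` [set t | t < n%:R]))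
      @ \oo --> \sum_(U | in_delta src tgt U e) y U.
    apply: cvg_nnesum => U _.
      by apply: nearW => n; exact: measure_ge0.
    exact: mu_cvg.
  apply: (cvge_le _ cv); apply: nearW => n.
  apply: le_trans (Hload n%:R (ler0n _ _) e); rewrite /load le_eqVlt; apply/orP; left.
  apply/eqP; apply: eq_bigr => U _; rewrite /ydual; congr (lebesgue_measure _).
  apply/seteqP; split => t /=.
  - by move=> [[h1 h3] h2]; split => //; apply/andP.
  - by move=> [/andP[h1 h2] h3].
have stepD : (\sum_U (k U)%:R%:E * y U <= (cost c OPT)%:E)%E.
  rewrite (eq_bigr (fun U => \sum_e (if (e \in OPT) && in_delta src tgt U e then y U else 0%E))); last first.
    move=> U _; rewrite /k /kU -sume_const big_mkcond /=.
    by apply: eq_bigr => e _; rewrite inE.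
  rewrite exchange_big /= /cost -sumEFin [in X in (_ <= X)%E]big_mkcond /=.
  apply: lee_sum => e _; case: (e \in OPT) => /=.
    by rewrite -big_mkcond; exact: stepE.
  by rewrite big1.
pose X := (\sum_U ((k U - s U)%:R)%:E * y U)%E.
pose Y := (\sum_(U in Usep src tgt D Fr bud) y U)%E.
have X0 : (0 <= X)%E by apply: sume_ge0 => U _; rewrite mule_ge0 // lee_fin.
have Y0 : (0 <= Y)%E by apply: sume_ge0 => U _.
have XY : (X + Y <= \sum_U (k U)%:R%:E * y U)%E.
  rewrite /Y big_mkcond /= /X -big_split /=; apply: lee_sum => U _.
  rewrite inE; case: ifP => [/andP[yp sU]|_].
    have k1 := sep_le_k Hfeas sU.
    rewrite /s sU -[X in (_ + X)%E]mul1e -ge0_muleDl ?lee_fin // -EFinD.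
    by rewrite natr1 subn1 prednK.
  rewrite adde0; apply: lee_wpmul2r => //; rewrite lee_fin ler_nat; exact: leq_subr.
have Yfin : Y \is a fin_num.
  rewrite ge0_fin_numE //; apply: (@le_lt_trans _ _ (cost c OPT)%:E); last exact: ltry.
  apply: le_trans stepD; apply: le_trans XY; exact: leeDr.
have stepC : (\sum_U (w U)%:R%:E * y U <= 2%:E * excess src tgt D c Fr bud OPT)%E.
  have -> : (\sum_U (w U)%:R%:E * y U = 2%:E * X)%E.
    rewrite /X ge0_sume_distrr; last by move=> U _; rewrite mule_ge0 // lee_fin.
    by apply: eq_bigr => U _; rewrite /w natrM EFinM muleA.
  apply: lee_wpmul2l; first by rewrite lee_fin.
  rewrite /excess leeBrDr //; apply: le_trans stepD; exact: XY.
have [HU HUP] := choice (fun U => hull (AU U)).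
apply: le_trans stepC; rewrite /Bval.
apply: (@le_trans _ _ (\int[mu]_(t in `[0%R, +oo[%classic)
   (\sum_U ((w U)%:R)%:E * (\1_(HU U) t)%:E))%E).
  apply: le_int_any => t t0; first by rewrite lee_fin.
  have t0' : 0 <= t by move: t0; rewrite /= in_itv /= andbT.
  under eq_bigr => U _ do rewrite -EFinM.
  rewrite sumEFin lee_fin.
  apply: (@le_trans _ _ (\sum_(U in act t) (w U)%:R)).
    rewrite -natr_sum ler_nat; apply: leq_trans (count_bad src tgt D Fr bud OPT r t) _.
    by apply: leq_sum => U _; exact: card_BU.
  rewrite big_mkcond /=; apply: ler_sum => U _; case: ifP => UA.
    case: (HUP U) => _ sub _.
    have tH : t \in HU U by apply/mem_set; apply: sub; split.
    by rewrite indicE tH mulr1.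
  by rewrite mulr_ge0 // indicE ler0n.
rewrite int_sum_indic //; last by move=> U; case: (HUP U).
apply: lee_sum => U _; apply: lee_wpmul2l; first by rewrite lee_fin.
rewrite yE /mu; case: (HUP U) => mH _ <-; apply: le_measure; rewrite ?inE //.
- by apply: measurableI => //; exact: measurable_itv.
Qed.
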